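(* Consider the Byzantine setting and Byzantine-resilient algorithm of the context, with aggregation rules having contraction constant $\rho$ and virtual weight matrix $E$, and let $\Lambda^k\in\mathbb R^{H\times D}$ be the matrix with rows $(\lambda_i^k)^\top$, $i\in\mathcal H$. Assume $\kappa:=\|E-\frac1H\mathbf 1\mathbf 1^\top E\|^2<1$, $\rho<\frac{1-\kappa}{8\sqrt H}$, and set $\epsilon:=1-\kappa-8\rho\sqrt H$, assumed to lie in $(0,1)$. Assume moreover that for all $k\ge0$ the step sizes satisfy $$\frac{18(\gamma^k)^2}{\epsilon\,u_f^2J^2}\le\frac{(2-\epsilon)\epsilon^2}{3(3-\epsilon)}\qquad\text{and}\qquad1\le\frac{(\gamma^k)^2}{(\gamma^{k+1})^2}\le\frac{2}{1+(1-\epsilon^2)}.$$ Then for every $k\ge0$, $$\Big\|\Lambda^{k+1}-\tfrac1H\mathbf 1\mathbf 1^\top\Lambda^{k+1}\Big\|_F^2\le\frac{18(\gamma^{k+1})^2\delta^2H^3}{\epsilon^3J^2}.$$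
   Context: Byzantine setting. $J$ agents on an undirected connected graph with neighbor sets $\mathcal N_i$; honest agents $\mathcal H=\{1,\dots,H\}$, Byzantine agents $\mathcal B=\{H+1,\dots,J\}$, honest subgraph connected. For $i\in\mathcal H$: $f_i:\mathbb R^D\to\mathbb R$ is $u_f$-strongly convex and $L_f$-smooth, $C_i\subset\mathbb R^D$ nonempty compact convex; $s\in\mathbb R^D$. $g_i(\lambda)=\frac1H\max_{\theta\in C_i}\{-\lambda^\top\theta-f_i(\theta)\}+\frac1H\lambda^\top s$, $\nabla g_i(\lambda)=\frac1H s-\frac1H\arg\min_{\theta\in C_i}\{\lambda^\top\theta+f_i(\theta)\}$, $\delta^2:=\sup_{\lambda}\max_{i\in\mathcal H}\|\nabla g_i(\lambda)-\frac1H\sum_{j\in\mathcal H}\nabla g_j(\lambda)\|^2<\infty$. Contraction property: $\{AGG_i\}_{i\in\mathcal H}$ has contraction constant $\rho\ge0$ and virtual weight matrix $E=[e_{ij}]\in\mathbb R^{H\times H}$ if $e_{ij}\in(0,1]$ for $j\in(\mathcal N_i\cap\mathcal H)\cup\{i\}$, $e_{ij}=0$ otherwise, $\sum_je_{ij}=1$, and for every $i\in\mathcal H$, all honest inputs $\lambda_j$ and arbitrary Byzantine inputs ($\check\lambda_j=\lambda_j$ for honest $j$, arbitrary for Byzantine $j$), $\|AGG_i(\lambda_i,\{\check\lambda_j\}_{j\in\mathcal N_i})-\bar\lambda_i\|\le\rho\max_{j\in(\mathcal N_i\cap\mathcal H)\cup\{i\}}\|\lambda_j-\bar\lambda_i\|$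 with $\bar\lambda_i=\sum_{j}e_{ij}\lambda_j$. Algorithm: common initialization $\lambda_i^0=\lambda^0$ for $i\in\mathcal H$; $\theta_i^k=\arg\min_{\theta\in C_i}\{\theta^\top\lambda_i^k+f_i(\theta)\}$, $\lambda_i^{k+1/2}=\lambda_i^k-\gamma^k(\frac1Js-\frac1J\theta_i^k)$, $\lambda_i^{k+1}=AGG_i(\lambda_i^{k+1/2},\{\check\lambda_j^{k+1/2}\}_{j\in\mathcal N_i})$ with $\check\lambda_j^{k+1/2}$ arbitrary for Byzantine $j$. $\|\cdot\|$ is the spectral norm for matrices, $\|\cdot\|_F$ Frobenius, $\mathbf 1\in\mathbb R^H$ all-ones. *)

(* Defs.v *)
From HB Require Import structures.
From mathcomp Require Import all_boot all_order all_algebra.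
From mathcomp Require Import all_classical all_reals all_analysis.
Set Implicit Arguments. Unset Strict Implicit. Unset Printing Implicit Defensive.
Import Order.TTheory GRing.Theory Num.Theory.
Import numFieldNormedType.Exports.
Local Open Scope classical_set_scope.
Local Open Scope ring_scope.

Section Defs.
Variable R : realType.

Definition dotv (D : nat) (u v : 'rV[R]_D) : R := \sum_(j < D) u 0 j * v 0 j.
Definition vnorm (D : nat) (v : 'rV[R]_D) : R := Num.sqrt (dotv v v).
Definition cnorm (n : nat) (v : 'cV[R]_n) : R := Num.sqrt (\sum_(i < n) v i 0 ^+ 2).

Definition spec_norm (m n : nat) (A : 'M[R]_(m, n)) : R :=
  sup [set cnorm (A *m x) | x in [set x : 'cV[R]_n | cnorm x <= 1]].

Definition frob2 (m n : nat) (A : 'M[R]_(m, n)) : R :=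
  \sum_(i < m) \sum_(j < n) A i j ^+ 2.

Definition strongly_convex (D : nat) (u : R) (f : 'rV[R]_D -> R) : Prop :=
  0 < u /\
  forall (x y : 'rV[R]_D) (t : R), 0 <= t -> t <= 1 ->
    f (t *: x + (1 - t) *: y) <=
      t * f x + (1 - t) * f y - u / 2 * t * (1 - t) * vnorm (x - y) ^+ 2.

Definition L_smooth (D : nat) (L : R) (f : 'rV[R]_D -> R) : Prop :=
  exists gf : 'rV[R]_D -> 'rV[R]_D,
    (forall x, differentiable f x /\ forall h, 'd f x h = dotv (gf x) h) /\
    (forall x y, vnorm (gf x - gf y) <= L * vnorm (x - y)).

Definition is_argmin (D : nat) (C : set 'rV[R]_D) (f : 'rV[R]_D -> R)
  (lam th : 'rV[R]_D) : Prop :=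
  C th /\ forall th', C th' -> dotv lam th + f th <= dotv lam th' + f th'.

(* input vector seen by an aggregator: honest values for honest agents
   (indices < H), arbitrary values b j for Byzantine agents *)
Definition checked (D H J : nat) (lam : 'I_H -> 'rV[R]_D) (b : 'I_J -> 'rV[R]_D)
  (j : 'I_J) : 'rV[R]_D :=
  match @insub nat (fun n => n < H)%N 'I_H (nat_of_ord j) with
  | Some h => lam h
  | None => b j
  end.

Definition wavg (D H : nat) (E : 'M[R]_H) (i : 'I_H) (lam : 'I_H -> 'rV[R]_D) :=
  \sum_(j < H) E i j *: lam j.

Definition stack (D H : nat) (lam : 'I_H -> 'rV[R]_D) : 'M[R]_(H, D) :=
  \matrix_(i < H, j < D) lam i 0 j.

Definition dev (H n : nat) (M : 'M[R]_(H, n)) : 'M[R]_(H, n) :=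
  M - (H%:R)^-1 *: (const_mx 1 *m M).

End Defs.

(* Main.v *)
Require Import Defs.
From HB Require Import structures.
From mathcomp Require Import all_boot all_order all_algebra.
From mathcomp Require Import all_classical all_reals all_analysis.
From mathcomp Require Import ring lra.
Set Implicit Arguments. Unset Strict Implicit. Unset Printing Implicit Defensive.
Import Order.TTheory GRing.Theory Num.Theory.
Import numFieldNormedType.Exports.
Local Open Scope classical_set_scope.
Local Open Scope ring_scope.

Section Vec.
Variables (R : realType) (D : nat).
Implicit Types (u v w : 'rV[R]_D).

Definition nsq v := dotv v v.

Lemma dotvC u v : dotv u v = dotv v u.
Proof. by apply: eq_bigr => j _; rewrite mulrC. Qed.

Lemma dotvDl u v w : dotv (u + v) w = dotv u w + dotv v w.
Proof. by rewrite /dotv -big_split; apply: eq_bigr => j _; rewrite mxE mulrDl. Qed.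

Lemma dotvZl a u w : dotv (a *: u) w = a * dotv u w.
Proof. by rewrite /dotv mulr_sumr; apply: eq_bigr => j _; rewrite mxE mulrA. Qed.

Lemma dotvNl u w : dotv (- u) w = - dotv u w.
Proof. by rewrite -scaleN1r dotvZl mulN1r. Qed.

Lemma dotvBl u v w : dotv (u - v) w = dotv u w - dotv v w.
Proof. by rewrite dotvDl dotvNl. Qed.

Lemma dotvDr u v w : dotv w (u + v) = dotv w u + dotv w v.
Proof. by rewrite !(dotvC w) dotvDl. Qed.

Lemma dotvZr a u w : dotv w (a *: u) = a * dotv w u.
Proof. by rewrite !(dotvC w) dotvZl. Qed.

Lemma dotvBr u v w : dotv w (u - v) = dotv w u - dotv w v.
Proof. by rewrite !(dotvC w) dotvBl. Qed.

Lemma dotv0l w : dotv 0 w = 0.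
Proof. by rewrite /dotv big1 // => j _; rewrite mxE mul0r. Qed.

Lemma dotv_suml n (F : 'I_n -> 'rV[R]_D) w :
  dotv (\sum_(i < n) F i) w = \sum_(i < n) dotv (F i) w.
Proof.
elim/big_rec2: _ => [|i y1 y2 _ <-]; first exact: dotv0l.
by rewrite dotvDl.
Qed.

Lemma nsq_ge0 v : 0 <= nsq v.
Proof. by apply: sumr_ge0 => j _; rewrite -expr2 sqr_ge0. Qed.

Lemma nsqZ a v : nsq (a *: v) = a ^+ 2 * nsq v.
Proof. by rewrite /nsq dotvZl dotvZr mulrA -expr2. Qed.

Lemma nsqN v : nsq (- v) = nsq v.
Proof. by rewrite -scaleN1r nsqZ sqrrN expr1n mul1r. Qed.

Lemma nsqD u v : nsq (u + v) = nsq u + 2 * dotv u v + nsq v.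
Proof.
rewrite /nsq dotvDl !dotvDr (dotvC v u); lra.
Qed.

Lemma nsqB u v : nsq (u - v) = nsq u - 2 * dotv u v + nsq v.
Proof. by rewrite nsqD nsqN (dotvC u) dotvNl (dotvC v) mulrN. Qed.

Lemma young u v b : 0 < b -> 2 * dotv u v <= b * nsq u + b^-1 * nsq v.
Proof.
move=> b0.
have h := nsq_ge0 (b *: u - v).
rewrite nsqB nsqZ dotvZl in h.
have hb : b * b^-1 = 1 by rewrite mulfV // gt_eqF.
have hi : 0 < b^-1 by rewrite invr_gt0.
set s := nsq u in h *; set t := nsq v in h *; set d := dotv u v in h *.
set c := b^-1 in hb hi *.
have h2 : 0 <= c * (b ^+ 2 * s - 2 * (b * d) + t) by rewrite mulr_ge0 // ltW.
have e : c * (b ^+ 2 * s - 2 * (b * d) + t) = (b * c) * (b * s) - 2 * (b * c) * d + c * t by ring.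
rewrite e hb in h2; lra.
Qed.

Lemma nsqD_le u v b : 0 < b -> nsq (u + v) <= (1 + b) * nsq u + (1 + b^-1) * nsq v.
Proof. move=> b0; have := @young u v b b0; rewrite nsqD; lra. Qed.

Lemma nsq_eq0 v : nsq v = 0 -> v = 0.
Proof.
move=> h; apply/rowP => j; rewrite mxE.
have : forall j, true -> 0 <= v 0 j * v 0 j by move=> k _; rewrite -expr2 sqr_ge0.
move/psumr_eq0P => /(_ h j isT) /eqP.
by rewrite -expr2 sqrf_eq0 => /eqP.
Qed.

Lemma vnorm_sq v : vnorm v ^+ 2 = nsq v.
Proof. by rewrite /vnorm sqr_sqrtr // nsq_ge0. Qed.

Lemma vnorm_ge0 v : 0 <= vnorm v.
Proof. exact: sqrtr_ge0. Qed.

End Vec.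

Section Fam.
Variables (R : realType) (D H : nat).
Implicit Types (a b z : 'I_H -> 'rV[R]_D).

Definition avg z := (H%:R)^-1 *: \sum_(i < H) z i.
Definition Vd z := \sum_(i < H) nsq (z i - avg z).

Lemma avgD a b : avg (fun i => a i + b i) = avg a + avg b.
Proof. by rewrite /avg big_split scalerDr. Qed.

Lemma avgZ c z : avg (fun i => c *: z i) = c *: avg z.
Proof. by rewrite /avg -scaler_sumr !scalerA mulrC. Qed.

Lemma Vd_ge0 z : 0 <= Vd z.
Proof. by apply: sumr_ge0 => i _; apply: nsq_ge0. Qed.

Lemma VdD a b c : 0 < c ->
  Vd (fun i => a i + b i) <= (1 + c) * Vd a + (1 + c^-1) * Vd b.
Proof.
move=> c0; rewrite /Vd avgD !mulr_sumr -big_split /=; apply: ler_sum => i _.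
have -> : a i + b i - (avg a + avg b) = (a i - avg a) + (b i - avg b).
  by rewrite opprD addrACA.
exact: nsqD_le.
Qed.

Lemma VdZ c z : Vd (fun i => c *: z i) = c ^+ 2 * Vd z.
Proof.
rewrite /Vd avgZ mulr_sumr; apply: eq_bigr => i _.
by rewrite -scalerBr nsqZ.
Qed.

Lemma Vd_le_S z : (0 < H)%N -> Vd z <= \sum_(i < H) nsq (z i).
Proof.
move=> H0; set m := avg z.
have e : forall i, nsq (z i) = nsq (z i - m) + 2 * dotv (z i - m) m + nsq m.
  by move=> i; rewrite -nsqD subrK.
rewrite (eq_bigr _ (fun i _ => e i)) big_split big_split /= -mulr_sumr -dotv_suml.
have -> : \sum_(i < H) (z i - m) = 0.
  rewrite sumrB sumr_const card_ord /m /avg -scaler_nat scalerA mulfV ?scale1r ?subrr //.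
  by rewrite pnatr_eq0 -lt0n.
rewrite dotv0l mulr0 addr0 sumr_const card_ord lerDl.
by rewrite mulrn_wge0 // nsq_ge0.
Qed.
End Fam.

Section Fam2.
Variables (R : realType) (D : nat).

Lemma Vd_const H (z : 'I_H -> 'rV[R]_D) c : (0 < H)%N -> (forall i, z i = c) -> Vd z = 0.
Proof.
move=> H0 hz; rewrite /Vd big1 // => i _.
have -> : avg z = c.
  rewrite /avg (eq_bigr (fun _ => c)); last by move=> j _; rewrite hz.
  rewrite sumr_const card_ord.
  by rewrite -(scaler_nat H c) scalerA mulVf ?scale1r // pnatr_eq0 -lt0n.
by rewrite hz subrr /nsq dotv0l.
Qed.

Lemma nsq_le_Vd H (z : 'I_H -> 'rV[R]_D) j : nsq (z j - avg z) <= Vd z.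
Proof.
rewrite /Vd (bigD1 j) //= lerDl; apply: sumr_ge0 => i _; exact: nsq_ge0.
Qed.

Lemma jensen n (e : 'I_n -> R) (v : 'I_n -> 'rV[R]_D) :
  (forall l, 0 <= e l) -> \sum_(l < n) e l = 1 ->
  nsq (\sum_(l < n) e l *: v l) <= \sum_(l < n) e l * nsq (v l).
Proof.
move=> e0 e1; set m := \sum_(l < n) e l *: v l.
have h : 0 <= \sum_(l < n) e l * nsq (v l - m).
  by apply: sumr_ge0 => l _; rewrite mulr_ge0 ?nsq_ge0.
have ex : forall l, e l * nsq (v l - m) = e l * nsq (v l) - 2 * dotv (e l *: v l) m + e l * nsq m.
  by move=> l; rewrite nsqB dotvZl; ring.
rewrite (eq_bigr _ (fun l _ => ex l)) big_split sumrB /= -mulr_sumr -dotv_suml -mulr_suml e1 in h.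
rewrite -/m /nsq in h *; lra.
Qed.

Lemma nsq_diff_le H (z : 'I_H -> 'rV[R]_D) j l : nsq (z j - z l) <= 4 * Vd z.
Proof.
have e : z j - z l = (z j - avg z) + (- (z l - avg z)) by rewrite opprB addrA subrK.
have := @nsqD_le _ _ (z j - avg z) (- (z l - avg z)) 1 ltr01.
rewrite -e invr1 nsqN => h.
have := nsq_le_Vd z j; have := nsq_le_Vd z l; lra.
Qed.

End Fam2.

Section Mat.
Variables (R : realType).

Lemma frob2_dev_stack D H (z : 'I_H -> 'rV[R]_D) : frob2 (dev (stack z)) = Vd z.
Proof.
rewrite /frob2 /Vd; apply: eq_bigr => i _; rewrite /nsq /dotv; apply: eq_bigr => j _.
rewrite -expr2 /avg !mxE summxE; congr ((_ - _ * _) ^+ _).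
by apply: eq_bigr => l _; rewrite !mxE mul1r.
Qed.

Lemma stack_wavg D H (E : 'M[R]_H) (z : 'I_H -> 'rV[R]_D) :
  stack (fun i => wavg E i z) = E *m stack z.
Proof.
apply/matrixP => i j; rewrite !mxE /wavg summxE; apply: eq_bigr => l _.
by rewrite !mxE.
Qed.

Lemma dev_mul D H (E : 'M[R]_H) (M : 'M[R]_(H, D)) : (0 < H)%N ->
  (forall i, \sum_(j < H) E i j = 1) ->
  dev (E *m M) = (E - (H%:R)^-1 *: (const_mx 1 *m E)) *m dev M.
Proof.
move=> H0 Erow.
have EJ : E *m (const_mx 1 : 'M[R]_(H, H)) = const_mx 1.
  by apply/matrixP => i j; rewrite !mxE -[RHS](Erow i); apply: eq_bigr => l _; rewrite mxE mulr1.
have JJ : (const_mx 1 : 'M[R]_(H, H)) *m (const_mx 1 : 'M[R]_(H, H)) = H%:R *: const_mx 1.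
  apply/matrixP => i j; rewrite !mxE (eq_bigr (fun _ => 1)); last by move=> l _; rewrite !mxE mulr1.
  by rewrite sumr_const card_ord mulr1.
have Hn : (H%:R : R) != 0 by rewrite pnatr_eq0 -lt0n.
set J := (const_mx 1 : 'M[R]_(H, H)) in EJ JJ *.
set c := (H%:R : R)^-1.
rewrite /dev mulmxBr !mulmxBl -!scalemxAl -!scalemxAr !mulmxA EJ -(mulmxA J E J) EJ JJ.
rewrite -scalemxAl scalerA mulVf // scale1r subrr subr0 /J /c.
by [].
Qed.
End Mat.

Section Spec.
Variables (R : realType).

Lemma cnorm_ge0 n (v : 'cV[R]_n) : 0 <= cnorm v.
Proof. exact: sqrtr_ge0. Qed.

Lemma cnorm_sq n (v : 'cV[R]_n) : cnorm v ^+ 2 = \sum_(i < n) v i 0 ^+ 2.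
Proof. by rewrite /cnorm sqr_sqrtr // sumr_ge0 // => i _; rewrite sqr_ge0. Qed.

Lemma cnormZ n a (v : 'cV[R]_n) : cnorm (a *: v) = `|a| * cnorm v.
Proof.
rewrite /cnorm -sqrtr_sqr -sqrtrM ?sqr_ge0 // mulr_sumr; congr Num.sqrt.
by apply: eq_bigr => i _; rewrite mxE exprMn.
Qed.

Lemma cnorm0 n : cnorm (0 : 'cV[R]_n) = 0.
Proof. by rewrite /cnorm big1 ?sqrtr0 // => i _; rewrite mxE expr0n. Qed.

Lemma cnorm_eq0 n (v : 'cV[R]_n) : cnorm v = 0 -> v = 0.
Proof.
move=> h; have : cnorm v ^+ 2 = 0 by rewrite h expr0n.
rewrite cnorm_sq => /psumr_eq0P h2; apply/matrixP => i j.
rewrite (ord1 j) mxE; apply/eqP; rewrite -sqrf_eq0; apply/eqP; apply: h2 => //.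
by move=> k _; rewrite sqr_ge0.
Qed.

Lemma cnorm_bound m n (A : 'M[R]_(m, n)) (x : 'cV[R]_n) : cnorm x <= 1 ->
  cnorm (A *m x) <= Num.sqrt (\sum_(i < m) (\sum_(j < n) `|A i j|) ^+ 2).
Proof.
move=> hx; rewrite /cnorm; apply: ler_wsqrtr; apply: ler_sum => i _.
have xj : forall j, `|x j 0| <= 1.
  move=> j; have : x j 0 ^+ 2 <= 1.
    have : cnorm x ^+ 2 <= 1 by rewrite expr_le1 // cnorm_ge0.
    rewrite cnorm_sq => h; apply: le_trans h.
    by rewrite (bigD1 j) //= lerDl sumr_ge0 // => k _; rewrite sqr_ge0.
  rewrite -real_normK ?num_real // => h.
  have := normr_ge0 (x j 0); nra.
have h1 : `|(A *m x) i 0| <= \sum_(j < n) `|A i j|.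
  rewrite mxE; apply: le_trans (ler_norm_sum _ _ _) _; apply: ler_sum => j _.
  rewrite normrM; have := xj j; have := normr_ge0 (A i j); have := normr_ge0 (x j 0); nra.
rewrite -real_normK ?num_real //; have := normr_ge0 ((A *m x) i 0); nra.
Qed.

Lemma cnorm_mul_le m n (A : 'M[R]_(m, n)) (v : 'cV[R]_n) :
  cnorm (A *m v) <= spec_norm A * cnorm v.
Proof.
have [->|v0] := eqVneq v 0; first by rewrite mulmx0 !cnorm0 mulr0.
have c0 : 0 < cnorm v.
  rewrite lt_neqAle cnorm_ge0 andbT eq_sym; apply/eqP => /cnorm_eq0 h.
  by rewrite h eqxx in v0.
set x := (cnorm v)^-1 *: v.
have hx : cnorm x = 1 by rewrite cnormZ ger0_norm ?invr_ge0 ?ltW // mulVf // gt_eqF.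
have hs : has_sup [set cnorm (A *m x) | x in [set x : 'cV[R]_n | cnorm x <= 1]].
  split; first by exists (cnorm (A *m 0)), 0 => //=; rewrite cnorm0.
  exists (Num.sqrt (\sum_(i < m) (\sum_(j < n) `|A i j|) ^+ 2)).
  by move=> y [z /= hz <-]; apply: cnorm_bound.
have hin : [set cnorm (A *m x) | x in [set x : 'cV[R]_n | cnorm x <= 1]] (cnorm (A *m x)).
  by exists x => //=; rewrite hx.
have h : cnorm (A *m x) <= spec_norm A by exact: (sup_upper_bound hs hin).
rewrite /x -scalemxAr cnormZ ger0_norm in h; last by rewrite invr_ge0 ltW.
by move: h; rewrite (mulrC (cnorm v)^-1) ler_pdivrMr.

Qed.

Lemma frob2_col m n (Y : 'M[R]_(m, n)) : frob2 Y = \sum_(j < n) cnorm (col j Y) ^+ 2.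
Proof.
rewrite /frob2 exchange_big; apply: eq_bigr => j _; rewrite cnorm_sq.
by apply: eq_bigr => i _; rewrite mxE.
Qed.

Lemma frob2_ge0 m n (Y : 'M[R]_(m, n)) : 0 <= frob2 Y.
Proof. by apply: sumr_ge0 => i _; apply: sumr_ge0 => j _; rewrite sqr_ge0. Qed.

Lemma frob2_mul_le m n p (A : 'M[R]_(m, n)) (Y : 'M[R]_(n, p)) :
  frob2 (A *m Y) <= spec_norm A ^+ 2 * frob2 Y.
Proof.
rewrite !frob2_col mulr_sumr; apply: ler_sum => j _.
have -> : col j (A *m Y) = A *m col j Y by rewrite !colE mulmxA.
have h := cnorm_mul_le A (col j Y).
have := cnorm_ge0 (A *m col j Y); have := cnorm_ge0 (col j Y).
move: h; set a := cnorm _; set b := cnorm _; set s := spec_norm A.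
move=> h ha hb.
have : a ^+ 2 <= (s * b) ^+ 2 by rewrite lerXn2r // ?nnegrE // (le_trans hb h).
by rewrite exprMn.
Qed.

End Spec.

Section Amin.
Variables (R : realType) (D : nat).
Local Open Scope convex_scope.

Lemma mid_in (C : set 'rV[R]_D) (cv : convex_set C) x y :
  C x -> C y -> C ((2:R)^-1 *: x + (1 - (2:R)^-1) *: y).
Proof.
move=> cx cy.
have h0 : 0 <= (2:R)^-1 by rewrite invr_ge0 ler0n.
have h1 : (2:R)^-1 <= 1 by rewrite invf_le1 ?ler1n.
have := cv x y (Itv01 h0 h1).
by rewrite !inE; apply.
Qed.

Lemma half_ineq (u : R) (f : 'rV[R]_D -> R) (C : set 'rV[R]_D) (a p q : 'rV[R]_D) :
  strongly_convex u f -> convex_set C -> is_argmin C f a p -> C q ->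
  dotv a p + f p <= dotv a q + f q - u / 4 * nsq (q - p).
Proof.
move=> [u0 sc] cv [Cp mp] Cq.
have := mp _ (mid_in cv Cq Cp).
have := sc q p (2:R)^-1; rewrite invr_ge0 ler0n invf_le1 ?ler1n // => /(_ isT isT).
rewrite vnorm_sq dotvDr !dotvZr.
set c := f _; set S := nsq _.
have e : u / 2 * 2^-1 * (1 - 2^-1) * S = (u * S) / 8.
  by rewrite -!mulrA; congr (_ * _); field.
have e2 : u / 4 * S = (u * S) / 4 by rewrite mulrAC.
rewrite e e2.
have e3 : (1 - (2:R)^-1) = 2^-1 by field.
rewrite !e3.
lra.
Qed.

Lemma amin_lip (u : R) (f : 'rV[R]_D -> R) (C : set 'rV[R]_D) (a b p q : 'rV[R]_D) :
  strongly_convex u f -> convex_set C -> is_argmin C f a p -> is_argmin C f b q ->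
  u ^+ 2 * nsq (p - q) <= 4 * nsq (a - b).
Proof.
move=> sc cv ap bq.
have u0 : 0 < u by case: sc.
have h1 := half_ineq sc cv ap bq.1.
have h2 := half_ineq sc cv bq ap.1.
have eS : nsq (q - p) = nsq (p - q) by rewrite -nsqN opprB.
rewrite eS in h1.
have P : u / 2 * nsq (p - q) <= dotv (a - b) (q - p).
  rewrite dotvBl !dotvBr.
  have e2 : u / 4 * nsq (p - q) = (u * nsq (p - q)) / 4 by rewrite mulrAC.
  have e1 : u / 2 * nsq (p - q) = (u * nsq (p - q)) / 2 by rewrite mulrAC.
  rewrite e1; rewrite e2 in h1 h2; lra.
have y := young (a - b) (q - p) (_ : 0 < 2 / u).
rewrite invf_div eS in y.
have y' := y (divr_gt0 (ltr0Sn _ 1) u0).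
have hS := nsq_ge0 (p - q); have hN := nsq_ge0 (a - b).
set S := nsq (p - q) in P y' hS *; set N := nsq (a - b) in y' hN *.
set d := dotv _ _ in P y'.
have : u * S <= 2 / u * N + u / 2 * S.
  have e1 : u / 2 * S = (u * S) / 2 by rewrite mulrAC.
  rewrite e1 in P *; lra.
move=> h.
have : u * (u * S) <= u * (2 / u * N + u / 2 * S) by rewrite ler_pM2l.
have -> : u * (2 / u * N + u / 2 * S) = 2 * N + (u * (u * S)) / 2.
  by field; rewrite gt_eqF.
move=> h3.
have -> : u ^+ 2 * S = u * (u * S) by rewrite mulrA expr2.
lra.
Qed.

End Amin.

Section Arith.
Variable R : realType.

Lemma arith (e g2 G2 P q X Vg Vmu Vy : R) :
  0 < e -> e < 1 -> 0 <= g2 -> 0 <= P -> 0 <= q -> 0 <= X ->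
  X <= 18 * g2 * P / e ^+ 3 ->
  18 * g2 * q / e <= (2 - e) * e ^+ 2 / (3 * (3 - e)) ->
  1 <= g2 / G2 -> g2 / G2 <= 2 / (1 + (1 - e ^+ 2)) ->
  Vy <= (1 - e) * Vmu ->
  Vmu <= (1 + e / 2) * X + (1 + 2 / e) * (g2 * Vg) ->
  Vg <= 2 * P + 8 * q * X ->
  Vy <= 18 * G2 * P / e ^+ 3.
Proof.
move=> e0 e1 g0 P0 q0 X0 hX hs r1 r2 hy hmu hg.
have e3 : 0 < e ^+ 3 by rewrite exprn_gt0.
set T := 18 * P / e ^+ 3.
have T0 : 0 <= T by rewrite divr_ge0 ?mulr_ge0 // ltW.
have hX' : X <= T * g2.
  by have -> : T * g2 = 18 * g2 * P / e ^+ 3 by rewrite /T; ring.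
have G0 : 0 < G2.
  rewrite lt_neqAle; apply/andP; split.
    by apply/eqP => G0; rewrite -G0 invr0 mulr0 ler10 in r1.
  rewrite leNgt; apply/negP => Gn.
  have : g2 / G2 <= 0 by rewrite mulr_ge0_le0 // invr_le0 ltW.
  lra.
have hG : g2 * (2 - e ^+ 2) <= 2 * G2.
  have h2 : 0 < 1 + (1 - e ^+ 2) by nra.
  rewrite ler_pdivlMr // in r2.
  have eg : g2 = (g2 / G2) * G2 by rewrite mulfVK // gt_eqF.
  set t := g2 / G2 in eg r2.
  rewrite eg.
  have : 0 <= G2 * (2 - t * (1 + (1 - e ^+ 2))) by apply: mulr_ge0; [exact: ltW | rewrite subr_ge0].
  have -> : 1 + (1 - e ^+ 2) = 2 - e ^+ 2 by ring.
  nra.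
have hq : g2 * q <= e ^+ 3 / 81.
  have h3 : 0 < 3 * (3 - e) by nra.
  have b1 : (2 - e) * e ^+ 2 / (3 * (3 - e)) <= 2 * e ^+ 2 / 9.
    rewrite ler_pdivrMr // mulrAC ler_pdivlMr //.
    have : 0 <= e ^+ 2 by rewrite sqr_ge0.
    nra.
  have k : 18 * g2 * q = (18 * g2 * q / e) * e by rewrite mulfVK // gt_eqF.
  have : 18 * g2 * q / e * e <= 2 * e ^+ 2 / 9 * e by rewrite ler_pM2r //; apply: le_trans b1.
  rewrite -k.
  have -> : 2 * e ^+ 2 / 9 * e = 2 * e ^+ 3 / 9 by rewrite exprS; ring.
  lra.
have hgV : g2 * Vg <= 17 / 81 * e ^+ 3 * (T * g2).
  have e2 : 2 * P * g2 = e ^+ 3 / 9 * (T * g2).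
    by rewrite /T; field; rewrite gt_eqF.
  have : g2 * Vg <= 2 * P * g2 + 8 * (g2 * q) * X.
    have := ler_wpM2l g0 hg; lra.
  rewrite e2 => h.
  have : 8 * (g2 * q) * X <= 8 * (e ^+ 3 / 81) * (T * g2).
    apply: ler_pM => //; [by rewrite !mulr_ge0 | lra].
  lra.
set Z := T * g2 in hX' hgV *.
have Z0 : 0 <= Z by rewrite mulr_ge0.
have hmu' : Vmu <= (1 + e / 2 + 17 / 81 * (e ^+ 3 + 2 * e ^+ 2)) * Z.
  have : (1 + 2 / e) * (g2 * Vg) <= (1 + 2 / e) * (17 / 81 * e ^+ 3 * Z).
    rewrite ler_pM2l //; have : 0 < 2 / e by rewrite divr_gt0.
    lra.
  have -> : (1 + 2 / e) * (17 / 81 * e ^+ 3 * Z) = 17 / 81 * (e ^+ 3 + 2 * e ^+ 2) * Z.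
    by field; rewrite gt_eqF.
  have : (1 + e / 2) * X <= (1 + e / 2) * Z by rewrite ler_pM2l //; lra.
  lra.
have hy' : Vy <= (1 - e) * (1 + e / 2 + 17 / 81 * (e ^+ 3 + 2 * e ^+ 2)) * Z.
  rewrite -mulrA; apply: le_trans hy _; rewrite ler_pM2l //; lra.
have hpoly : (1 - e) * (1 + e / 2 + 17 / 81 * (e ^+ 3 + 2 * e ^+ 2)) <= 1 - e ^+ 2 / 2.
  rewrite !expr2 exprS expr2. nra.
have : Vy <= (1 - e ^+ 2 / 2) * Z.
  by apply: le_trans hy' _; apply: ler_wpM2r.
have -> : 18 * G2 * P / e ^+ 3 = T * G2 by rewrite /T; ring.
move=> h; apply: le_trans h _; rewrite /Z.
have : T * (g2 * (2 - e ^+ 2)) <= T * (2 * G2) by apply: ler_wpM2l.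
have -> : (1 - e ^+ 2 / 2) * (T * g2) = T * (g2 * (2 - e ^+ 2)) / 2 by field.
lra.
Qed.
End Arith.

Section StepA.
Variables (R : realType) (D H : nat).

Lemma diff_wavg (E : 'M[R]_H) (mu : 'I_H -> 'rV[R]_D) i j :
  (forall l, 0 <= E i l) -> \sum_(l < H) E i l = 1 ->
  nsq (mu j - wavg E i mu) <= 4 * Vd mu.
Proof.
move=> E0 E1.
have -> : mu j - wavg E i mu = \sum_(l < H) E i l *: (mu j - mu l).
  by rewrite (eq_bigr _ (fun l _ => scalerBr _ _ _)) sumrB -scaler_suml E1 scale1r.
apply: le_trans (jensen _ E0 E1) _.
rewrite -[X in _ <= X]mul1r -E1 mulr_suml; apply: ler_sum => l _.
apply: ler_wpM2l => //; rewrite E1; exact: nsq_diff_le.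
Qed.

Lemma stepA (E : 'M[R]_H) (Pn : 'I_H -> pred 'I_H) (rho eps : R) (mu y : 'I_H -> 'rV[R]_D) :
  (0 < H)%N ->
  (forall i l, 0 <= E i l) -> (forall i, \sum_(l < H) E i l = 1) ->
  0 <= rho ->
  eps = 1 - spec_norm (E - (H%:R)^-1 *: (const_mx 1 *m E)) ^+ 2 - 8 * rho * Num.sqrt (H%:R) ->
  0 < eps ->
  (forall i, vnorm (y i - wavg E i mu) <=
      rho * \big[Num.max/0]_(j < H | Pn i j) vnorm (mu j - wavg E i mu)) ->
  Vd y <= (1 - eps) * Vd mu.
Proof.
move=> H0 E0 E1 r0 epsd eps0 hc.
set kap := spec_norm _ ^+ 2 in epsd.
have k0 : 0 <= kap by rewrite sqr_ge0.
set w := fun i => wavg E i mu.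
set r := fun i => y i - w i.
have V0 := Vd_ge0 mu.
have hw : Vd w <= kap * Vd mu.
  rewrite -frob2_dev_stack stack_wavg dev_mul // -frob2_dev_stack.
  exact: frob2_mul_le.
have hr : forall i, nsq (r i) <= rho ^+ 2 * (4 * Vd mu).
  move=> i; have := hc i.
  have hm : \big[Num.max/0]_(j < H | Pn i j) vnorm (mu j - wavg E i mu) <= Num.sqrt (4 * Vd mu).
    apply: bigmax_le; first exact: sqrtr_ge0.
    move=> j _; apply: ler_wsqrtr; exact: diff_wavg.
  move=> h.
  have h2 : vnorm (r i) <= rho * Num.sqrt (4 * Vd mu).
    by apply: le_trans h _; apply: ler_wpM2l.
  rewrite -vnorm_sq -(sqr_sqrtr (_ : 0 <= 4 * Vd mu)) ?mulr_ge0 // -exprMn.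
  by rewrite lerXn2r ?nnegrE ?vnorm_ge0 // (le_trans (vnorm_ge0 _) h2).
have ey : y = fun i => w i + r i by apply: funext => i; rewrite /r addrC subrK.
have sH := sqrtr_ge0 (H%:R : R).
have sH2 : Num.sqrt (H%:R : R) ^+ 2 = H%:R by rewrite sqr_sqrtr ?ler0n.
have [r00|rp] := eqVneq rho 0.
  rewrite r00 in hr epsd.
  have r0i : forall i, r i = 0.
    move=> i; apply: nsq_eq0; apply/eqP; rewrite eq_le nsq_ge0 andbT.
    by have := hr i; rewrite expr0n mul0r.
  have -> : y = w by rewrite ey; apply: funext => i; rewrite r0i addr0.
  move: epsd; rewrite mulr0 mul0r subr0 => ->.
  by rewrite opprB addrC subrK.
have rpos : 0 < rho by rewrite lt_neqAle eq_sym rp.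
have sHp : 0 < Num.sqrt (H%:R : R) by rewrite sqrtr_gt0 ltr0n.
set b := 2 * rho * Num.sqrt (H%:R).
have bp : 0 < b by rewrite /b !mulr_gt0.
have hR : Vd r <= b ^+ 2 * Vd mu.
  apply: le_trans (Vd_le_S _ H0) _.
  apply: le_trans (ler_sum _ (fun i _ => hr i)) _.
  rewrite sumr_const card_ord -mulr_natr /b !exprMn sH2.
  rewrite le_eqVlt; apply/orP; left; apply/eqP; ring.
rewrite ey; apply: le_trans (VdD _ _ bp) _.
have e2 : (1 - eps) = kap + 4 * b by rewrite epsd /b; ring.
rewrite e2.
have h1 : (1 + b) * Vd w <= (1 + b) * (kap * Vd mu) by rewrite ler_wpM2l // addr_ge0 // ltW.
have h2 : (1 + b^-1) * Vd r <= (1 + b^-1) * (b ^+ 2 * Vd mu).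
  by rewrite ler_wpM2l // addr_ge0 // invr_ge0 ltW.
have e3 : (1 + b^-1) * (b ^+ 2 * Vd mu) = (b ^+ 2 + b) * Vd mu.
  by field; rewrite gt_eqF.
rewrite e3 in h2.
have hb : kap + 4 * b < 1 by lra.
have : b * (kap + b) * Vd mu <= b * 3 * Vd mu.
  apply: ler_wpM2r => //; apply: ler_wpM2l; [exact: ltW | lra].
have : 0 <= kap * Vd mu by rewrite mulr_ge0.
nra.
Qed.
End StepA.

Section StepC.
Variables (R : realType) (D H J : nat).

Lemma stepC (u delta : R) (s : 'rV[R]_D) (f : 'I_H -> 'rV[R]_D -> R)
  (C : 'I_H -> set 'rV[R]_D) (amin : 'I_H -> 'rV[R]_D -> 'rV[R]_D) (x : 'I_H -> 'rV[R]_D) :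
  (0 < H)%N -> (0 < J)%N ->
  (forall i, strongly_convex u (f i)) -> (forall i, convex_set (C i)) ->
  (forall i lam, is_argmin (C i) (f i) lam (amin i lam)) ->
  (forall (lam : 'rV[R]_D) (i : 'I_H),
      let gg := fun j => (H%:R)^-1 *: s - (H%:R)^-1 *: amin j lam in
      vnorm (gg i - (H%:R)^-1 *: \sum_(j < H) gg j) ^+ 2 <= delta ^+ 2) ->
  Vd (fun i => (J%:R)^-1 *: s - (J%:R)^-1 *: amin i (x i)) <=
    2 * (delta ^+ 2 * (H%:R) ^+ 3 / (J%:R) ^+ 2) + 8 * (1 / (u ^+ 2 * (J%:R) ^+ 2)) * Vd x.
Proof.
move=> H0 J0 sc cv am hd.
have u0 : 0 < u by case: (sc (Ordinal H0)).
have Hp : (0 : R) < H%:R by rewrite ltr0n.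
have Jp : (0 : R) < J%:R by rewrite ltr0n.
set xb := avg x.
set G := fun i => (H%:R)^-1 *: s - (H%:R)^-1 *: amin i xb.
set dd := fun i => (H%:R)^-1 *: (amin i xb - amin i (x i)).
have eg : (fun i => (J%:R)^-1 *: s - (J%:R)^-1 *: amin i (x i)) =
          (fun i => (H%:R / J%:R) *: (G i + dd i)).
  apply: funext => i; rewrite /G /dd scalerBr addrA subrK -!scalerBr scalerA.
  by rewrite mulrAC mulfV ?mul1r // gt_eqF.
rewrite eg VdZ.
have hG : Vd G <= H%:R * delta ^+ 2.
  apply: (@le_trans _ _ (\sum_(i < H) delta ^+ 2)).
    apply: ler_sum => i _.
    by have := hd xb i; rewrite /= vnorm_sq.
  by rewrite sumr_const card_ord mulr_natl.
have hdd : Vd dd <= (H%:R)^-2 * (4 / u ^+ 2) * Vd x.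
  apply: le_trans (Vd_le_S _ H0) _.
  rewrite /Vd mulr_sumr; apply: ler_sum => i _.
  rewrite /dd nsqZ exprVn -mulrA; apply: ler_wpM2l; first by rewrite invr_ge0 sqr_ge0.
  have := amin_lip (sc i) (cv i) (am i xb) (am i (x i)).
  have -> : nsq (xb - x i) = nsq (x i - avg x) by rewrite -nsqN opprB.
  by move=> h; rewrite mulrAC ler_pdivlMr ?exprn_gt0 // mulrC.
have hV := VdD G dd ltr01.
rewrite invr1 in hV.
have c0 : 0 <= (H%:R / J%:R : R) ^+ 2 by rewrite sqr_ge0.
apply: le_trans (ler_wpM2l c0 hV) _.
have h2 : (1 + 1) * Vd G + (1 + 1) * Vd dd <=
          2 * (H%:R * delta ^+ 2) + 2 * ((H%:R)^-2 * (4 / u ^+ 2) * Vd x) by lra.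
apply: le_trans (ler_wpM2l c0 h2) _.
rewrite le_eqVlt; apply/orP; left; apply/eqP.
field; rewrite ?gt_eqF //.
Qed.
End StepC.

Unset Implicit Arguments.
Theorem lemma4
  (R : realType) (D H J : nat) (HJ : (H <= J)%N) (H0 : (0 < H)%N)
  (* undirected connected graph on the J agents; honest agents are 0..H-1 *)
  (N : 'I_J -> {set 'I_J})
  (Nsym : forall i j, (j \in N i) = (i \in N j))
  (Nirr : forall i, i \notin N i)
  (Nconn : forall i j, connect (fun a b => b \in N a) i j)
  (Hconn : forall i j : 'I_H,
      connect (fun a b : 'I_H => widen_ord HJ b \in N (widen_ord HJ a)) i j)
  (* local objectives and constraint sets of honest agents *)
  (uf Lf : R) (f : 'I_H -> 'rV[R]_D -> R) (C : 'I_H -> set 'rV[R]_D)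
  (s : 'rV[R]_D)
  (fconv : forall i, strongly_convex uf (f i))
  (fsmooth : forall i, L_smooth Lf (f i))
  (Cne : forall i, C i !=set0) (Ccpt : forall i, compact (C i))
  (Ccvx : forall i, convex_set (C i))
  (* argmin_{theta in C_i} { lam^T theta + f_i theta } *)
  (amin : 'I_H -> 'rV[R]_D -> 'rV[R]_D)
  (aminP : forall i lam, is_argmin (C i) (f i) lam (amin i lam))
  (* delta^2 bounds the heterogeneity of the dual gradients
     grad g_i(lam) = (1/H) s - (1/H) amin i lam *)
  (delta : R)
  (hdelta : forall (lam : 'rV[R]_D) (i : 'I_H),
      let gg := fun j => (H%:R)^-1 *: s - (H%:R)^-1 *: amin j lam in
      vnorm (gg i - (H%:R)^-1 *: \sum_(j < H) gg j) ^+ 2 <= delta ^+ 2)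
  (* aggregation rules with contraction constant rho and virtual weights E *)
  (AGG : 'I_H -> 'rV[R]_D -> ('I_J -> 'rV[R]_D) -> 'rV[R]_D)
  (rho : R) (E : 'M[R]_H)
  (rho_ge0 : 0 <= rho)
  (Epos : forall i j : 'I_H,
      (widen_ord HJ j \in N (widen_ord HJ i)) || (j == i) ->
      0 < E i j /\ E i j <= 1)
  (Ezero : forall i j : 'I_H,
      ~~ ((widen_ord HJ j \in N (widen_ord HJ i)) || (j == i)) -> E i j = 0)
  (Erow : forall i, \sum_(j < H) E i j = 1)
  (contr : forall (i : 'I_H) (lam : 'I_H -> 'rV[R]_D) (b : 'I_J -> 'rV[R]_D),
      vnorm (AGG i (lam i) (checked lam b) - wavg E i lam) <=
      rho * \big[Num.max/0]_(j < H |
                 (widen_ord HJ j \in N (widen_ord HJ i)) || (j == i))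
               vnorm (lam j - wavg E i lam))
  (* constants *)
  (kappa eps : R)
  (kappa_def : kappa = spec_norm (E - (H%:R)^-1 *: (const_mx 1 *m E)) ^+ 2)
  (kappa_lt1 : kappa < 1)
  (rho_small : rho < (1 - kappa) / (8 * Num.sqrt (H%:R)))
  (eps_def : eps = 1 - kappa - 8 * rho * Num.sqrt (H%:R))
  (eps_pos : 0 < eps) (eps_lt1 : eps < 1)
  (* step sizes *)
  (gamma : nat -> R)
  (step1 : forall k, 18 * gamma k ^+ 2 / (eps * uf ^+ 2 * (J%:R) ^+ 2)
                     <= (2 - eps) * eps ^+ 2 / (3 * (3 - eps)))
  (step2 : forall k, 1 <= gamma k ^+ 2 / gamma k.+1 ^+ 2 /\
                     gamma k ^+ 2 / gamma k.+1 ^+ 2 <= 2 / (1 + (1 - eps ^+ 2)))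
  (* the algorithm, with arbitrary Byzantine messages byz k i j sent by
     Byzantine agent j to honest agent i at iteration k *)
  (lam0 : 'rV[R]_D) (lam : nat -> 'I_H -> 'rV[R]_D)
  (byz : nat -> 'I_H -> 'I_J -> 'rV[R]_D)
  (init : forall i, lam 0%N i = lam0)
  (update : forall k i,
      let lamh := fun j => lam k j - gamma k *:
                    ((J%:R)^-1 *: s - (J%:R)^-1 *: amin j (lam k j)) in
      lam k.+1 i = AGG i (lamh i) (checked lamh (byz k i))) :
  forall k : nat,
    frob2 (dev (stack (lam k.+1))) <=
    18 * gamma k.+1 ^+ 2 * delta ^+ 2 * (H%:R) ^+ 3 / (eps ^+ 3 * (J%:R) ^+ 2).
Proof.
have hJ : (0 < J)%N := leq_trans H0 HJ.
have u0 : 0 < uf by case: (fconv (Ordinal H0)).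
have Jp : (0 : R) < J%:R by rewrite ltr0n.
have Hp : (0 : R) < H%:R by rewrite ltr0n.
have Eg0 : forall i l, 0 <= E i l.
  move=> i l; case: (boolP ((widen_ord HJ l \in N (widen_ord HJ i)) || (l == i))) => h.
    by have [/ltW] := Epos i l h.
  by rewrite (Ezero i l h).
pose lamh n := fun j => lam n j - gamma n *:
                    ((J%:R)^-1 *: s - (J%:R)^-1 *: amin j (lam n j)).
set P := delta ^+ 2 * (H%:R) ^+ 3 / (J%:R) ^+ 2.
have P0 : 0 <= P.
  apply: divr_ge0; [apply: mulr_ge0; [exact: sqr_ge0 | exact: exprn_ge0 (ltW Hp)] | exact: exprn_ge0 (ltW Jp)].
have e3 : 0 < eps ^+ 3 by rewrite exprn_gt0.
have eT : forall g : R, 18 * g ^+ 2 * delta ^+ 2 * (H%:R) ^+ 3 / (eps ^+ 3 * (J%:R) ^+ 2)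
                        = 18 * g ^+ 2 * P / eps ^+ 3.
  by move=> g; rewrite /P; field; rewrite ?gt_eqF.
have claim : forall n, Vd (lam n) <= 18 * gamma n ^+ 2 * P / eps ^+ 3.
  elim=> [|n IH].
    rewrite (Vd_const (z := lam 0%N) (c := lam0) H0 init).
    by apply: divr_ge0; [apply: mulr_ge0; [rewrite mulr_ge0 // sqr_ge0 | exact: P0] | exact: ltW].
  have hA : Vd (lam n.+1) <= (1 - eps) * Vd (lamh n).
    apply: (stepA (Pn := fun i j => (widen_ord HJ j \in N (widen_ord HJ i)) || (j == i))
              H0 Eg0 Erow rho_ge0 _ eps_pos).
      by rewrite eps_def kappa_def.
    move=> i.
    have up : lam n.+1 i = AGG i (lamh n i) (checked (lamh n) (byz n i)) := update n i.
    rewrite up; exact: contr.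
  set g := fun i => (J%:R)^-1 *: s - (J%:R)^-1 *: amin i (lam n i).
  have hB : Vd (lamh n) <= (1 + eps / 2) * Vd (lam n) + (1 + 2 / eps) * (gamma n ^+ 2 * Vd g).
    have -> : lamh n = fun i => lam n i + (- gamma n) *: g i.
      by apply: funext => i; rewrite /lamh scaleNr.
    have := VdD (lam n) (fun i => (- gamma n) *: g i) (_ : 0 < eps / 2).
    rewrite invf_div VdZ sqrrN; apply; by rewrite divr_gt0.
  have hC := @stepC R D H J uf delta s f C amin (lam n) H0 hJ fconv Ccvx aminP hdelta.
  rewrite -/g -/P in hC.
  apply: (arith eps_pos eps_lt1 (sqr_ge0 _) P0 _ (Vd_ge0 _) IH _ (step2 n).1 (step2 n).2 hA hB hC).
    by rewrite divr_ge0 ?ler01 // mulr_ge0 // sqr_ge0.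
  have := step1 n.
  have -> : 18 * gamma n ^+ 2 / (eps * uf ^+ 2 * J%:R ^+ 2) =
            18 * gamma n ^+ 2 * (1 / (uf ^+ 2 * J%:R ^+ 2)) / eps.
    by field; rewrite ?gt_eqF.
  by [].
move=> k; rewrite frob2_dev_stack eT; exact: claim.
Qed.
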